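(* For every positive integer $t$, $r_t\ge\frac13$.
   Context: A voter matrix with $t$ topics is a matrix $V\in\{Y,N\}^{n\times t}$ for some positive integer $n$ (rows are voters), subject to the standing assumption that in every column the number of entries $Y$ is at least the number of entries $N$. $\mathcal{V}_t$ is the set of all voter matrices with $t$ topics and any number of voters. A proposal is a vector $p\in\{Y,N\}^t$. A voter $v$ supports $p$ if the Hamming distance between $v$ and $p$ is at most $t/2$; $p$ is supported by $V$ if at least $n/2$ rows of $V$ support $p$. For $i=1,\dots,t$ let $m_i$ be the fraction of entries $Y$ in column $i$ of $V$, and $m_V=\frac1t\sum_i m_i$. For a proposal $p$ let $m_i'=m_i$ if $p_i=Y$ and $m_i'=1-m_i$ if $p_i=N$; set $R_p=\frac1t\sum_i m_i'$ and $r_p=R_p/m_V$. Let $r_V=\max r_p$ over all proposals $p$ supported by $V$, and $r_t=\inf_{V\in\mathcal{V}_t} r_V$. *)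

(* Defs.v *)
From HB Require Import structures.
From mathcomp Require Import all_boot all_order all_algebra.
From mathcomp Require Import boolp classical_sets reals.
Set Implicit Arguments. Unset Strict Implicit. Unset Printing Implicit Defensive.
Import Order.TTheory GRing.Theory Num.Theory.
Local Open Scope ring_scope.
Local Open Scope classical_set_scope.

(* Entries: true = Y, false = N.  Rows = voters, columns = topics. *)
Definition voter_matrix (n t : nat) (V : 'M[bool]_(n, t)) : Prop :=
  (0 < n)%N /\
  forall j : 'I_t, (#|[set i | ~~ V i j]| <= #|[set i | V i j]|)%N.

Definition proposal (t : nat) := {ffun 'I_t -> bool}.

Definition hamming (n t : nat) (V : 'M[bool]_(n, t)) (i : 'I_n) (p : proposal t) : nat :=
  #|[set j : 'I_t | V i j != p j]|.

Definition supports (n t : nat) (V : 'M[bool]_(n, t)) (i : 'I_n) (p : proposal t) : bool :=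
  (2 * hamming V i p <= t)%N.

Definition supported (n t : nat) (V : 'M[bool]_(n, t)) (p : proposal t) : bool :=
  (n <= 2 * #|[set i | supports V i p]|)%N.

Section Ratios.
Variable R : realType.

Definition mcol (n t : nat) (V : 'M[bool]_(n, t)) (j : 'I_t) : R :=
  (#|[set i | V i j]|)%:R / n%:R.

Definition mV (n t : nat) (V : 'M[bool]_(n, t)) : R :=
  (t%:R)^-1 * \sum_(j < t) mcol V j.

Definition mcol' (n t : nat) (V : 'M[bool]_(n, t)) (p : proposal t) (j : 'I_t) : R :=
  if p j then mcol V j else 1 - mcol V j.

Definition Rp (n t : nat) (V : 'M[bool]_(n, t)) (p : proposal t) : R :=
  (t%:R)^-1 * \sum_(j < t) mcol' V p j.

Definition rp (n t : nat) (V : 'M[bool]_(n, t)) (p : proposal t) : R :=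
  Rp V p / mV V.

(* r_V = max of r_p over supported proposals (0 if there were none;
   all r_p are >= 0, so this does not affect the max otherwise). *)
Definition rV (n t : nat) (V : 'M[bool]_(n, t)) : R :=
  \big[Order.max/0]_(p : proposal t | supported V p) rp V p.

Definition rt (t : nat) : R :=
  inf [set x : R | exists n : nat, exists V : 'M[bool]_(n, t),
                     voter_matrix V /\ x = rV V].
End Ratios.

(* Main.v *)
Require Import Defs.
From HB Require Import structures.
From mathcomp Require Import all_boot all_order all_algebra.
From mathcomp Require Import boolp classical_sets reals.
From mathcomp Require Import zify ring lra.
Import Order.TTheory GRing.Theory Num.Theory.
Local Open Scope ring_scope.

Lemma card_mkset (T : finType) (P : pred T) :
  #|mem (mkset (fun x => is_true (P x)))| = #|[set x | P x]|.
Proof.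
apply: eq_card => x; rewrite inE; apply/idP/idP.
  by rewrite in_setE.
by move=> H; rewrite in_setE.
Qed.

Section Proof.
Variable R : realType.
Variables (n t : nat) (V : 'M[bool]_(n, t)).
Hypothesis HV : voter_matrix V.
Hypothesis Ht : (0 < t)%N.

Definition pneg (p : proposal t) : proposal t := [ffun j => ~~ p j].

Lemma hamming_neg i p : (hamming V i p + hamming V i (pneg p) = t)%N.
Proof.
rewrite /hamming !card_mkset -[X in _ = X]card_ord -(cardsC [set j | V i j != p j]).
congr (_ + _)%N; apply: eq_card => j; rewrite !inE ?ffunE.
by case: (V i j); case: (p j).
Qed.

Lemma supported_or p : supported V p || supported V (pneg p).
Proof.
rewrite /supported !card_mkset.
have H : (n <= #|[set i | supports V i p]| + #|[set i | supports V i (pneg p)]|)%N.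
  apply: leq_trans _ (leq_card_setU _ _).1.
  rewrite -[X in (X <= _)%N]card_ord -cardsT; apply: subset_leq_card.
  apply/fintype.subsetP => i _; rewrite !inE /supports.
  have := hamming_neg i p; lia.
apply/orP; lia.
Qed.

Lemma colmaj j : (n <= 2 * #|[set i | V i j]|)%N.
Proof.
have H1 := (proj2 HV) j; rewrite !card_mkset in H1.
have H2 := cardsC [set i | V i j].
have E : #|~: [set i | V i j]| = #|[set i | ~~ V i j]|.
  by apply: eq_card => i; rewrite !inE.
rewrite card_ord E in H2; lia.
Qed.

Lemma npos : (0 < n)%N. Proof. exact: (proj1 HV). Qed.

Let m j := mcol R V j.
Let s := \sum_(j < t) m j.
Let sig (p : proposal t) := \sum_(j < t) mcol' R V p j.

Lemma m_bounds j : 2^-1 <= m j /\ m j <= 1.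
Proof.
have hn : (0 : R) < n%:R by rewrite ltr0n npos.
have hc := colmaj j.
have hc' : (#|[set i | V i j]| <= n)%N.
  by rewrite -[X in (_ <= X)%N]card_ord subset_leq_card // subset_predT.
have E : m j * n%:R = #|[set i | V i j]|%:R.
  by rewrite /m /mcol card_mkset divfK // gt_eqF.
have h1 : (n%:R : R) <= 2 * #|[set i | V i j]|%:R.
  by rewrite -natrM ler_nat.
have h2 : (#|[set i | V i j]|%:R : R) <= n%:R by rewrite ler_nat.
split; nra.
Qed.

Lemma s_bounds : t%:R / 2 <= s /\ s <= t%:R.
Proof.
split.
- have -> : t%:R / 2 = \sum_(j < t) (2^-1 : R).
    by rewrite sumr_const card_ord -[RHS]mulr_natr mulrC.
  by rewrite /s; apply: ler_sum => j _; case: (m_bounds j).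
- have -> : (t%:R : R) = \sum_(j < t) (1 : R) by rewrite sumr_const card_ord.
  by rewrite /s; apply: ler_sum => j _; case: (m_bounds j).
Qed.

Lemma sig_neg p : sig (pneg p) = t%:R - sig p.
Proof.
rewrite /sig.
have H : forall j, mcol' R V (pneg p) j = 1 - mcol' R V p j.
  by move=> j; rewrite /mcol' ffunE; case: (p j) => /=; ring.
by rewrite (eq_bigr _ (fun j _ => H j)) sumrB sumr_const card_ord.
Qed.

Definition pk (k : nat) : proposal t := [ffun j : 'I_t => (j < k)%N].

Lemma sig_p0 : sig (pk 0) = t%:R - s.
Proof.
rewrite /sig /s.
have H : forall j, mcol' R V (pk 0) j = 1 - m j.
  by move=> j; rewrite /mcol' ffunE.
by rewrite (eq_bigr _ (fun j _ => H j)) sumrB sumr_const card_ord.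
Qed.

Lemma sig_pt : sig (pk t) = s.
Proof.
rewrite /sig /s; apply: eq_bigr => j _.
by rewrite /mcol' ffunE ltn_ord.
Qed.

Lemma sig_step (k : 'I_t) : sig (pk k.+1) = sig (pk k) + 2 * m k - 1.
Proof.
rewrite /sig (bigD1 k) //= [X in _ = X + _ - _](bigD1 k) //=.
rewrite /mcol' !ffunE ltnSn ltnn.
have -> : \sum_(i < t | i != k) (if pk k.+1 i then mcol R V i else 1 - mcol R V i)
        = \sum_(i < t | i != k) (if pk k i then mcol R V i else 1 - mcol R V i).
  apply: eq_bigr => i hi; rewrite !ffunE ltnS leq_eqVlt.
  by have -> : (val i == val k) = false by apply/negbTE.
rewrite /m; ring.
Qed.

Definition good p := s / 3 <= sig p /\ sig p <= t%:R - s / 3.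

Lemma walk : (3 <= t)%N -> exists p, good p.
Proof.
move=> t3.
have [s1 s2] := s_bounds.
have ht3 : (3 : R) <= t%:R by rewrite (ler_nat R 3 t).
suff H : forall k, (k <= t)%N -> s / 3 <= sig (pk k) -> exists p, good p.
  by apply: (H t) => //; rewrite sig_pt; lra.
elim=> [|k IH] hk hs.
  by exists (pk 0); split => //; rewrite sig_p0; lra.
have hk' : (k < t)%N by [].
have := sig_step (Ordinal hk') => /= E.
have [mb1 mb2] := m_bounds (Ordinal hk').
case: (lerP (s / 3) (sig (pk k))) => h.
  by apply: IH => //; exact: ltnW.
exists (pk k.+1); split => //; rewrite E; lra.
Qed.

Lemma walk2 : t = 2%N -> exists p, good p.
Proof.
move=> t2.
have h0 : (0 < t)%N by rewrite t2.
have h1 : (1 < t)%N by rewrite t2.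
have E0 := sig_step (Ordinal h0).
have E1 := sig_step (Ordinal h1).
have := m_bounds (Ordinal h0); have := m_bounds (Ordinal h1).
move=> [a1 a2] [b1 b2].
have P0 := sig_p0.
have Pt : sig (pk 2) = s by rewrite -sig_pt; congr (sig (pk _)).
have tR : (t%:R : R) = 2 by rewrite t2.
simpl in E0, E1.
exists (pk 1); split; lra.
Qed.

Lemma exists_sup : exists p, supported V p /\ s / 3 <= sig p.
Proof.
have [s1 s2] := s_bounds.
have tpos : (0 : R) < t%:R by rewrite ltr0n.
case: (ltngtP t 2) => [t2|t2|t2].
-
  have t1 : t = 1%N by lia.
  exists (pk t); rewrite sig_pt; split; last by lra.
  rewrite /supported card_mkset.
  pose j0 : 'I_t := Ordinal Ht.
  apply: leq_trans (colmaj j0) _; rewrite leq_mul2l /=.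
  apply: subset_leq_card; apply/fintype.subsetP => i; rewrite !inE => hv.
  rewrite /supports /hamming card_mkset.
  suff -> : [set j | V i j != pk t j] = finset.set0 by rewrite cards0.
  apply/setP => j; rewrite !inE ffunE ltn_ord.
  have -> : j = j0 by apply: val_inj => /=; have := ltn_ord j; lia.
  by rewrite hv.
- have [p [g1 g2]] := walk t2.
  case/orP: (supported_or p) => hp; first by exists p.
  exists (pneg p); split => //; rewrite sig_neg; lra.
- have [p [g1 g2]] := walk2 t2.
  case/orP: (supported_or p) => hp; first by exists p.
  exists (pneg p); split => //; rewrite sig_neg; lra.
Qed.

Lemma main : 3%:R^-1 <= rV R V.
Proof.
have [p [hp hs]] := exists_sup.
have [s1 s2] := s_bounds.
have tpos : (0 : R) < t%:R by rewrite ltr0n.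
have spos : 0 < s by lra.
apply: le_trans (le_bigmax_cond _ _ hp).
have -> : rp R V p = sig p / s.
  rewrite /rp /Rp /mV -/s -/(sig p); field.
  by apply/andP; split; [rewrite gt_eqF | rewrite pnatr_eq0 -lt0n].
rewrite ler_pdivlMr //; lra.
Qed.

End Proof.

Theorem corollary5p4 (R : realType) (t : nat) :
  (0 < t)%N -> 3%:R^-1 <= rt R t.
Proof.
move=> Ht.
apply: lb_le_inf.
  exists (rV R (const_mx true : 'M[bool]_(1, t))).
  exists 1%N, (const_mx true); split => //.
  split => // j; rewrite !card_mkset; apply: subset_leq_card; apply/fintype.subsetP => i.
  by rewrite !inE mxE.
move=> x [n [V [HV ->]]].
exact: main.
Qed.
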